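(* Let $G$ be a graph on vertex set $V=\{1,\ldots,n\}$ and $G_l$ a graph on $V$ with $E(G)\subseteq E(G_l)$. Suppose $A\in\mathcal{S}(G)$, $X\in\overline{\mathcal{S}_0}(G_l^c)$, and $AX-XA=0$. If there exists a vertex $i$ such that the induced subgraph $G_l^c[N_G(i)]$ has a connected component that is a cycle $C$ of odd length, and for each $j\in V(C)$ the pair $\{i,j\}$ is focused on $V(C)$ with respect to $G$ and $G_l$, then $X\in\overline{\mathcal{S}_0}(G_{l+1}^c)$, where $G_{l+1}=G_l+E(C)$.
   Context: All graphs are finite, simple, undirected. For a graph $G$ on $\{1,\ldots,n\}$, $\mathcal{S}(G)$ is the set of real symmetric $n\times n$ matrices $A=(a_{ij})$ with $a_{ij}\neq0$ iff $\{i,j\}\in E(G)$ for $i\neq j$ (diagonal arbitrary). For a graph $H$ on $\{1,\ldots,n\}$, $\overline{\mathcal{S}_0}(H)$ is the set of real symmetric matrices whose $(i,j)$ entry is zero whenever $i=j$ or $\{i,j\}\notin E(H)$; $H^c$ is the complement of $H$. $N_G(i)$ is the (open) set of neighbours of $i$ in $G$, $N_G[i]$ the closed neighbourhood, and $N_G[i]^c$ its complement in $V$; $H[W]$ is the subgraph of $H$ induced on $W$. For nonempty $U\subseteq V$, a pair $\{i,j\}$ is focused on $U$ with respect to $G$ and $G_l$ if $N_G[i]\cap N_{G_l}[j]^c\subseteq U$ and $N_G[j]\cap N_{G_l}[i]^c\subseteq U$. *)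

(* Defs.v *)
From HB Require Import structures.
From mathcomp Require Import all_boot all_order all_algebra.
From mathcomp Require Import reals.
Set Implicit Arguments. Unset Strict Implicit. Unset Printing Implicit Defensive.
Import Order.TTheory GRing.Theory Num.Theory.
Local Open Scope ring_scope.

(* Graphs on V = {1..n} are represented on 'I_n by a relation. *)
Definition simple_graph n (G : rel 'I_n) : Prop :=
  symmetric G /\ irreflexive G.

Definition gcompl n (H : rel 'I_n) : rel 'I_n := fun i j => (i != j) && ~~ H i j.

Definition edge_sub n (G H : rel 'I_n) : Prop := forall i j, G i j -> H i j.

Definition SG (R : realType) n (G : rel 'I_n) (A : 'M[R]_n) : Prop :=
  A^T = A /\ forall i j, i != j -> (A i j != 0) = G i j.

Definition S0bar (R : realType) n (H : rel 'I_n) (X : 'M[R]_n) : Prop :=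
  X^T = X /\ forall i j, (i == j) || ~~ H i j -> X i j = 0.

Definition nbhd n (G : rel 'I_n) (i : 'I_n) : {set 'I_n} := [set j | G i j].
Definition cnbhd n (G : rel 'I_n) (i : 'I_n) : {set 'I_n} := i |: nbhd G i.

Definition focused n (G Gl : rel 'I_n) (U : {set 'I_n}) (i j : 'I_n) : Prop :=
  (cnbhd G i :&: ~: cnbhd Gl j) \subset U /\
  (cnbhd G j :&: ~: cnbhd Gl i) \subset U.

Definition cyc_adj n (s : seq 'I_n) (x y : 'I_n) : Prop :=
  exists2 t, (t < size s)%N &
    (nth x s t = x /\ nth x s (t.+1 %% size s) = y) \/
    (nth x s t = y /\ nth x s (t.+1 %% size s) = x).

(* The subgraph of H induced on W has a connected component which is the
   cycle on the vertices of s (listed in cyclic order), of odd length. *)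
Definition odd_cycle_component n (H : rel 'I_n) (W : {set 'I_n}) (s : seq 'I_n)
  : Prop :=
  [/\ uniq s, (3 <= size s)%N, odd (size s) & {subset s <= W}] /\
  (forall x y, x \in s -> y \in s -> (H x y <-> cyc_adj s x y)) /\
  (forall x y, x \in s -> y \in W -> y \notin s -> ~~ H x y).

(* G_l + E(C), where E(C) = edges of the cycle C (edges of G_l^c among s) *)
Definition add_cycle_edges n (Gl : rel 'I_n) (s : seq 'I_n) : rel 'I_n :=
  fun x y => Gl x y || [&& x \in s, y \in s & gcompl Gl x y].

(* Main.v *)
Require Import Defs.
From HB Require Import structures.
From mathcomp Require Import all_boot all_order all_algebra.
From mathcomp Require Import reals.
From mathcomp Require Import ring.
Import Order.TTheory GRing.Theory Num.Theory.
Local Open Scope ring_scope.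

Theorem lemma3p8 (R : realType) (n : nat) (G Gl : rel 'I_n)
  (A X : 'M[R]_n) (i : 'I_n) (s : seq 'I_n) :
  simple_graph G -> simple_graph Gl -> edge_sub G Gl ->
  SG G A -> S0bar (gcompl Gl) X -> A *m X - X *m A = 0 ->
  odd_cycle_component (gcompl Gl) (nbhd G i) s ->
  (forall j, j \in s -> focused G Gl [set x in s] i j) ->
  S0bar (gcompl (add_cycle_edges Gl s)) X.
Proof.
move=> [Gsym Girr] [Glsym Glirr] GGl [At Anz] [Xt Xz] Hcomm
  [[us m3 oddm sW] [Hcyc _]] Hfoc.
have Xsym : forall a b, X a b = X b a.
  by move=> a b; have := congr1 (fun M : 'M[R]_n => M a b) Xt; rewrite !mxE => <-.
have Gs : forall k, k \in s -> G i k.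
  by move=> k /sW; rewrite inE.
set m := size s.
have m0 : (0 < m)%N by apply: leq_trans m3.
pose v t := nth i s (t %% m).
have vs : forall t, v t \in s by move=> t; apply: mem_nth; rewrite ltn_pmod.
have Aiv : forall t, A i (v t) != 0.
  move=> t; rewrite Anz; first exact: Gs.
  by apply/eqP => E; move: (Gs _ (vs t)); rewrite -E Girr.
have nthE : forall a b, (a < m)%N -> (b < m)%N -> nth i s a = nth i s b -> a = b.
  by move=> a b am bm /eqP; rewrite nth_uniq // => /eqP.
have nbr : forall t k, k \in s -> gcompl Gl k (v t.+1) -> k = v t \/ k = v t.+2.
  move=> t k ks /(Hcyc _ _ ks (vs _)) [u um [[E1 E2]|[E1 E2]]].
  - left; rewrite (set_nth_default i) // in E1.
    rewrite (set_nth_default i) ?ltn_pmod // in E2.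
    have := nthE _ _ (ltn_pmod _ m0) (ltn_pmod _ m0) E2.
    move/eqP; rewrite -addn1 -(addn1 t) eqn_modDr => /eqP.
    by rewrite (modn_small um) => Eu; rewrite -E1 Eu.
  - right; rewrite (set_nth_default i) // in E1.
    rewrite (set_nth_default i) ?ltn_pmod // in E2.
    have := nthE _ _ um (ltn_pmod _ m0) E1 => Eu.
    by rewrite -E2 /v Eu; congr nth; rewrite -[in LHS]addn1 modnDml addn1.
have vdist : forall t, v t != v t.+2.
  move=> t; apply/eqP => /(nthE _ _ (ltn_pmod _ m0) (ltn_pmod _ m0)) /eqP.
  by rewrite -addn2 -{1}(addn0 t) eqn_modDl mod0n (modn_small m3).
have key : forall t, A i (v t) * X (v t) (v t.+1) + A i (v t.+2) * X (v t.+2) (v t.+1) = 0.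
  move=> t; set j := v t.+1.
  have [F1 F2] := Hfoc j (vs _).
  have := congr1 (fun M : 'M[R]_n => M i j) Hcomm; rewrite !mxE.
  have -> : \sum_k X i k * A k j = 0.
    apply: big1 => k _.
    have [->|Akj] := eqVneq (A k j) 0; first by rewrite mulr0.
    have [->|Xik] := eqVneq (X i k) 0; first by rewrite mul0r.
    exfalso.
    have kc : k \in cnbhd G j :&: ~: cnbhd Gl i.
      rewrite !inE; apply/andP; split.
        have [//|kj] := eqVneq k j; rewrite /= Gsym -Anz //.
      apply/negP => /orP [/eqP E|Gik].
        by move: Xik; rewrite E Xz ?eqxx.
      by move: Xik; rewrite (Xz i k) ?eqxx // /gcompl Gik andbF orbT.
    have := subsetP F2 _ kc; rewrite inE => /Gs /GGl Gik.
    by move: Xik; rewrite (Xz i k) ?eqxx // /gcompl Gik andbF orbT.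
  rewrite subr0.
  rewrite (bigD1 (v t)) //= (bigD1 (v t.+2)) //=; last by rewrite eq_sym vdist.
  rewrite big1 ?addr0 ?addrA // => k /andP [k1 k2].
  have [->|Aik] := eqVneq (A i k) 0; first by rewrite mul0r.
  have [->|Xkj] := eqVneq (X k j) 0; first by rewrite mulr0.
  exfalso.
  have gkj : gcompl Gl k j.
    apply: contraR Xkj => H; apply/eqP; apply: Xz; by rewrite H orbT.
  have kc : k \in cnbhd G i :&: ~: cnbhd Gl j.
    rewrite !inE; apply/andP; split.
      have [//|ik] := eqVneq k i; rewrite /= -Anz // eq_sym //.
    move: gkj; rewrite /gcompl => /andP [kj nGl].
    by rewrite negb_or kj Glsym.

  have := subsetP F1 _ kc; rewrite inE => ks.
  by case: (nbr t k ks gkj) => E; [move: k1|move: k2]; rewrite E eqxx.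
pose f t := A i (v t) * A i (v t.+1) * X (v t) (v t.+1).
have fS : forall t, f t.+1 = - f t.
  move=> t; apply/eqP; rewrite -subr_eq0 opprK /f.
  have := congr1 (fun r => A i (v t.+1) * r) (key t); rewrite mulr0 => <-.
  by rewrite (Xsym (v t.+2)); apply/eqP; ring.
have fk : forall t k, f (t + k)%N = (-1) ^+ k * f t.
  move=> t; elim=> [|k IH]; first by rewrite addn0 expr0 mul1r.
  by rewrite addnS fS IH exprS; ring.
have fper : forall t, f (t + m)%N = f t.
  move=> t; by rewrite /f /v -addSn !modnDr.
have f0 : forall t, f t = 0.
  move=> t; have := fk t m; rewrite fper -signr_odd oddm expr1 mulN1r.
  move/eqP; rewrite -subr_eq0 opprK -mulr2n -mulr_natr mulf_eq0 pnatr_eq0 orbF.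
  by move/eqP.
have e0 : forall t, X (v t) (v t.+1) = 0.
  move=> t; have := f0 t; rewrite /f => /eqP; rewrite !mulf_eq0 !(negPf (Aiv _)) /=.
  by move/eqP.
split=> // x y; rewrite /gcompl negb_and !negbK /add_cycle_edges.
case/orP => [/eqP <-|/orP [Gxy|H3]].
- by apply: Xz; rewrite eqxx.
- by apply: Xz; rewrite /gcompl Gxy /= ?andbF ?orbT.
move: H3; case xs: (x \in s); case ys: (y \in s) => /= /orP [Gxy|gxy] //;
  try by apply: Xz; rewrite /gcompl Gxy /= ?andbF ?orbT.

have [u um [[E1 E2]|[E1 E2]]] := (Hcyc _ _ xs ys).1 gxy.
- rewrite (set_nth_default i) // in E1.
  rewrite (set_nth_default i) ?ltn_pmod // in E2.
  by move: (e0 u); rewrite /v (modn_small um) E1 E2.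
- rewrite (set_nth_default i) // in E1.
  rewrite (set_nth_default i) ?ltn_pmod // in E2.
  by rewrite Xsym; move: (e0 u); rewrite /v (modn_small um) E1 E2.
Qed.
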